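(* Let $\mathcal{G}_{k-1}=(V,E_{k-1})$ be an unweighted simple directed graph, let $e_k=(u_k,v_k)$ with $u_k\neq v_k$, $u_k,v_k\in V$, and $e_k\notin E_{k-1}$, and let $\mathcal{G}_k=(V,E_{k-1}\cup\{e_k\})$. Let $\Delta\mathcal{F}_k=\mathcal{F}(\mathcal{G}_k)\setminus\mathcal{F}(\mathcal{G}_{k-1})$ and $$\mathcal{F}(\mathcal{G}'_{k-1})=\{\phi\in\mathcal{F}(\mathcal{G}_{k-1}) : r_\phi(u_k)=u_k,\ r_\phi(v_k)\neq u_k\}.$$ Then for every spanning converging forest $\phi\in\Delta\mathcal{F}_k$, the forest $\phi'=\phi\setminus\{e_k\}$ belongs to $\mathcal{F}(\mathcal{G}'_{k-1})$, and the map $\phi\mapsto\phi\setminus\{e_k\}$ is a bijection from $\Delta\mathcal{F}_k$ onto $\mathcal{F}(\mathcal{G}'_{k-1})$.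
   Context: A rooted converging tree is a weakly connected digraph without cycles in which one node (the root) has out-degree $0$ and every other node has out-degree $1$ (an isolated node is such a tree rooted at itself). A spanning converging forest of a digraph $\mathcal{G}=(V,E)$ is a spanning subgraph (containing all of $V$ and a subset of $E$, identified with its edge set) whose weakly connected components are rooted converging trees. $\mathcal{F}(\mathcal{G})$ denotes the set of all spanning converging forests of $\mathcal{G}$. For a forest $\phi$ and node $i$, $r_\phi(i)$ denotes the root of the tree of $\phi$ containing $i$. *)

(* Defs.v *)
From mathcomp Require Import all_boot.
Set Implicit Arguments. Unset Strict Implicit. Unset Printing Implicit Defensive.

Section Forests.
Variable V : finType.
Implicit Types (E F : {set V * V}) (x y r : V).

(* a simple digraph: no self loops (edge set => no multi-edges) *)
Definition simple_digraph E : bool := [forall x, (x, x) \notin E].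

Definition erel F : rel V := fun x y => (x, y) \in F.
Definition wrel F : rel V := fun x y => ((x, y) \in F) || ((y, x) \in F).

Definition wcomp F x : {set V} := [set y | connect (wrel F) x y].

Definition outdeg F x : nat := #|[set y | (x, y) \in F]|.

(* no directed cycle (including self-loops) *)
Definition dacyclic F : bool :=
  [forall x, forall y, ((x, y) \in F) ==> ~~ connect (erel F) y x].

Definition conv_tree_comp F x : bool :=
  [exists r in wcomp F x,
     (outdeg F r == 0) &&
     [forall y in wcomp F x, (y != r) ==> (outdeg F y == 1)]].

(* spanning converging forest of the digraph (V,E), identified with its edge set *)
Definition sc_forest E F : bool :=
  [&& F \subset E, dacyclic F & [forall x, conv_tree_comp F x]].

Definition forest_root F x : V :=
  odflt x [pick r in wcomp F x | outdeg F r == 0].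

End Forests.

(* Main.v *)
Require Import Defs.
From mathcomp Require Import all_boot.
Set Implicit Arguments. Unset Strict Implicit. Unset Printing Implicit Defensive.

Definition detf (V : finType) (F : {set V * V}) :=
  forall x y z, (x, y) \in F -> (x, z) \in F -> y = z.

Lemma outdeg_det (V : finType) (F : {set V * V}) :
  (forall x, outdeg F x <= 1) -> detf F.
Proof.
move=> H x y z Hy Hz; have /card_le1_eqP Hc := H x.
by apply: Hc; rewrite inE.
Qed.

Lemma det_outdeg (V : finType) (F : {set V * V}) x :
  detf F -> outdeg F x <= 1.
Proof.
move=> H; apply/card_le1_eqP => y z; rewrite !inE => Hy Hz.
exact: H Hz Hy.
Qed.

Lemma out0 (V : finType) (F : {set V * V}) x y :
  outdeg F x = 0 -> (x, y) \notin F.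
Proof.
move=> H; apply/negP => Hy.
have : y \in [set y | (x, y) \in F] by rewrite inE.
by move/eqP: H; rewrite cards_eq0 => /eqP ->; rewrite inE.
Qed.

Lemma out0' (V : finType) (F : {set V * V}) x :
  (forall y, (x, y) \notin F) -> outdeg F x = 0.
Proof.
move=> H; apply/eqP; rewrite cards_eq0; apply/eqP/setP => y.
by rewrite !inE (negbTE (H y)).
Qed.

Lemma conn_mono (V : finType) (F1 F2 : {set V * V}) x y :
  F1 \subset F2 -> connect (erel F1) x y -> connect (erel F2) x y.
Proof.
move=> S; apply: connect_sub => a b Hab; apply: connect1.
by rewrite /erel (subsetP S _ Hab).
Qed.

Lemma root_end (V : finType) (F : {set V * V}) y z :
  outdeg F y = 0 -> connect (erel F) y z -> y = z.
Proof.
move=> H /connectP [[|c p] /= Hp ->] //.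
by move: Hp => /andP [Hc _]; move: (out0 c H); rewrite /erel in Hc; rewrite Hc.
Qed.

Lemma exists_root (V : finType) (F : {set V * V}) x :
  dacyclic F -> exists r, connect (erel F) x r /\ outdeg F r = 0.
Proof.
move=> Hac.
move: {2}#|[set z | connect (erel F) x z]| (leqnn #|[set z | connect (erel F) x z]|) => n.
elim: n x => [|n IH] x Hn.
  have : x \in [set z | connect (erel F) x z] by rewrite inE connect0.
  by move=> Hx; move: Hn; rewrite leqn0 cards_eq0 => /eqP E; rewrite E inE in Hx.
case E: (outdeg F x == 0); first by exists x; split; [exact: connect0 | apply/eqP].
have [y Hy] : exists y, (x, y) \in F.
  apply/existsP; apply: contraFT E => /existsPn H; apply/eqP/out0' => y.
  exact: H.
have Hyx : ~~ connect (erel F) y x.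
  by move/forallP: Hac => /(_ x) /forallP /(_ y) /implyP; apply.
have [r [Hr1 Hr2]] : exists r, connect (erel F) y r /\ outdeg F r = 0.
  apply: IH; rewrite -ltnS; apply: leq_trans Hn; apply: proper_card.
  apply/properP; split.
    apply/subsetP => z; rewrite !inE; apply: connect_trans; exact: connect1.
  by exists x; rewrite !inE ?connect0.
by exists r; split => //; apply: connect_trans Hr1; exact: connect1.
Qed.

Lemma step (V : finType) (F : {set V * V}) a b r :
  detf F -> (a, b) \in F -> connect (erel F) a r -> outdeg F r = 0 ->
  connect (erel F) b r.
Proof.
move=> D Hab /connectP [[|c p] /= Hp Er] Hr.
  by move: (out0 b Hr); rewrite -Er in Hab; rewrite Hab.
move: Hp => /andP [Hc Hp]; have Ecb := D _ _ _ Hc Hab.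
by apply/connectP; exists p; rewrite -?Ecb.
Qed.

Lemma wprop (V : finType) (F : {set V * V}) x y r :
  detf F -> connect (wrel F) x y -> connect (erel F) x r -> outdeg F r = 0 ->
  connect (erel F) y r.
Proof.
move=> D /connectP [p Hp ->] Hx Hr.
elim: p x Hp Hx => [|c p IH] x //= /andP [Hc Hp] Hx.
apply: IH Hp _; move: Hc; rewrite /wrel => /orP [Hc|Hc].
  exact: step Hc Hx Hr.
by apply: connect_trans Hx; apply: connect1.
Qed.

Lemma forest_ok (V : finType) (F : {set V * V}) x :
  detf F -> dacyclic F -> conv_tree_comp F x.
Proof.
move=> D Hac; have [r [Hr1 Hr2]] := exists_root x Hac.
apply/existsP; exists r; apply/and3P; split.
- rewrite inE; apply: connect_sub Hr1 => a b Hab; apply: connect1.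
  by rewrite /wrel -/(erel F a b) Hab.
- by apply/eqP.
apply/forallP => y; apply/implyP; rewrite inE => Hy; apply/implyP => Hyr.
have := det_outdeg y D; case E: (outdeg F y) => [|k] //.
  have := wprop D Hy Hr1 Hr2 => /(root_end E) Eyr.
  by rewrite Eyr eqxx in Hyr.
by case: k E.
Qed.

Lemma sc_det (V : finType) (E F : {set V * V}) : sc_forest E F -> detf F.
Proof.
case/and3P => _ _ /forallP H; apply: outdeg_det => x.
have /existsP [r /and3P [Hr /eqP Hr0 /forallP Hall]] := H x.
have Hx : x \in wcomp F x by rewrite inE connect0.
case: (eqVneq x r) => [->|Hxr]; first by rewrite Hr0.
by have /implyP/(_ Hx)/implyP/(_ Hxr)/eqP -> := Hall x.
Qed.

Lemma mk_sc (V : finType) (E F : {set V * V}) :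
  F \subset E -> dacyclic F -> detf F -> sc_forest E F.
Proof.
move=> S A D; apply/and3P; split => //; apply/forallP => x; exact: forest_ok.
Qed.

Lemma wcomp_eq (V : finType) (F : {set V * V}) x y :
  connect (wrel F) x y -> wcomp F x = wcomp F y.
Proof.
have Sym : connect_sym (wrel F).
  by apply: sym_connect_sym => a b; rewrite /wrel orbC.
move=> H; apply/setP => z; rewrite !inE; apply/idP/idP => Hz.
  by apply: connect_trans Hz; rewrite Sym.
exact: connect_trans Hz.
Qed.

Lemma root_in (V : finType) (E F : {set V * V}) x :
  sc_forest E F -> forest_root F x \in wcomp F x /\ outdeg F (forest_root F x) = 0.
Proof.
case/and3P => _ _ /forallP /(_ x) /existsP [r /and3P [Hr /eqP Hr0 _]].
rewrite /forest_root; case: pickP => [r' /andP [H1 /eqP H2]|H] //=.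
by move: (H r); rewrite Hr Hr0 eqxx.
Qed.

Lemma root_eq (V : finType) (E F : {set V * V}) x y :
  sc_forest E F -> connect (wrel F) x y -> forest_root F x = forest_root F y.
Proof.
move=> Hs H; rewrite /forest_root (wcomp_eq H); case: pickP => //= Hn.
case/and3P: Hs => _ _ /forallP /(_ y) /existsP [r /and3P [Hr /eqP Hr0 _]].
by move: (Hn r); rewrite Hr Hr0 eqxx.
Qed.

Lemma root_eqE (V : finType) (E F : {set V * V}) x y :
  sc_forest E F -> connect (erel F) x y -> forest_root F x = forest_root F y.
Proof.
move=> Hs H; apply: (root_eq Hs); apply: connect_sub H => a b Hab; apply: connect1.
by rewrite /wrel -/(erel F a b) Hab.
Qed.

Lemma root_self (V : finType) (E F : {set V * V}) y :
  sc_forest E F -> outdeg F y = 0 -> forest_root F y = y.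
Proof.
move=> Hs Hy; have [H1 H2] := root_in y Hs; rewrite inE in H1.
have := wprop (sc_det Hs) H1 (connect0 _ y) Hy.
by move/(root_end H2).
Qed.

Lemma uv_in (V : finType) (E F : {set V * V}) u v :
  sc_forest ((u, v) |: E) F -> ~~ sc_forest E F -> (u, v) \in F.
Proof.
move=> Hs; apply: contraNT => Hn; case/and3P: Hs => S A C; apply/and3P; split => //.
apply/subsetP => e He; have := subsetP S e He; case/setU1P => // Ee.
by move: Hn; rewrite -Ee He.
Qed.

Lemma partA (V : finType) (E F : {set V * V}) u v :
  (u, v) \notin E -> sc_forest ((u, v) |: E) F -> (u, v) \in F ->
  [&& sc_forest E (F :\ (u, v)), forest_root (F :\ (u, v)) u == u
    & forest_root (F :\ (u, v)) v != u].
Proof.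
move=> HuvE Hs Huv; set F' := F :\ (u, v).
have D := sc_det Hs.
have SF : F' \subset F by apply: subD1set.
have HA := Hs; case/and3P: HA => S A _.
have S' : F' \subset E.
  apply/subsetP => e; rewrite !inE => /andP [Hne He].
  by have := subsetP S e He; rewrite in_setU1 (negbTE Hne).
have A' : dacyclic F'.
  apply/forallP => x; apply/forallP => y; apply/implyP => Hxy.
  have Hxy' := subsetP SF _ Hxy.
  move/forallP: A => /(_ x) /forallP /(_ y) /implyP /(_ Hxy').
  by apply: contra; apply: conn_mono.
have D' : detf F'.
  move=> x y z; rewrite !inE => /andP [_ Hy] /andP [_ Hz]; exact: D Hy Hz.
have Hs' : sc_forest E F' by apply: mk_sc.
have Hu0 : outdeg F' u = 0.
  apply: out0' => y; apply/negP; rewrite !inE => /andP [Hne Hy].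
  by rewrite (D _ _ _ Huv Hy) eqxx in Hne.
apply/and3P; split => //; first by rewrite (root_self Hs' Hu0).
apply/eqP => Hr; have [H1 _] := root_in v Hs'; rewrite Hr inE in H1.
have [r [Hr1 Hr2]] := exists_root v A'.
have := wprop D' H1 Hr1 Hr2 => /(root_end Hu0) Eur; subst r.
move/forallP: A => /(_ u) /forallP /(_ v) /implyP /(_ Huv) /negP; apply.
exact: conn_mono Hr1.
Qed.

Lemma l1 (V : finType) (E F : {set V * V}) u v a b :
  sc_forest E F -> forest_root F u = u ->
  connect (erel ((u, v) |: F)) a b -> forest_root F a != u ->
  connect (erel F) a b.
Proof.
move=> Hs Hu /connectP [p Hp ->]; elim: p a Hp => [|c p IH] a /=.
  by rewrite connect0.
move/andP=> [Hc Hp] Ha; rewrite /erel in Hc; case/setU1P: Hc => [[Ea Ec]|Hc].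
  by rewrite Ea Hu eqxx in Ha.
have Hc' : connect (erel F) a c by apply: connect1.
have Hr := root_eqE Hs Hc'.
apply: connect_trans Hc' (IH _ Hp _).
by rewrite -Hr.
Qed.

Lemma l2 (V : finType) (E F : {set V * V}) u v a b :
  sc_forest E F -> forest_root F u = u -> forest_root F v != u ->
  connect (erel ((u, v) |: F)) a b ->
  connect (erel F) a b \/ forest_root F b != u.
Proof.
move=> Hs Hu Hv /connectP [p Hp ->]; elim: p a Hp => [|c p IH] a /=.
  by left; rewrite connect0.
move/andP=> [Hc Hp]; rewrite /erel in Hc; case/setU1P: Hc => [[Ea Ec]|Hc].
  subst c; right.
  have Hvb : connect (erel ((u, v) |: F)) v (last v p) by apply/connectP; exists p.
  by rewrite -(root_eqE Hs (l1 Hs Hu Hvb Hv)).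
case: (IH _ Hp) => H; last by right.
by left; apply: connect_trans H; apply: connect1.
Qed.

Lemma partB (V : finType) (E F : {set V * V}) u v :
  sc_forest E F -> forest_root F u = u -> forest_root F v != u ->
  sc_forest ((u, v) |: E) ((u, v) |: F).
Proof.
move=> Hs Hu Hv.
have Hu0 : outdeg F u = 0 by have [_ H] := root_in u Hs; rewrite Hu in H.
have D := sc_det Hs.
have HA := Hs; case/and3P: HA => S A _.
apply: mk_sc.
- apply/subsetP => e; case/setU1P => [->|He]; first by rewrite setU11.
  by rewrite in_setU1 (subsetP S e He) orbT.
- apply/forallP => x; apply/forallP => y; apply/implyP => Hxy; apply/negP => Hyx.
  case/setU1P: Hxy => [[Ex Ey]|Hxy].
    subst x y; have := l1 Hs Hu Hyx Hv => /(root_eqE Hs).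
    by rewrite Hu => Hvu; rewrite Hvu eqxx in Hv.
  have Hn := A; move/forallP: Hn => /(_ x) /forallP /(_ y) /implyP /(_ Hxy) /negP Hn.
  case: (l2 Hs Hu Hv Hyx) => H; first exact: Hn.
  apply: Hn; apply: (l1 Hs Hu Hyx).
  by rewrite (root_eqE Hs (connect1 (e := erel F) Hxy)) in H.
- move=> x y z; case/setU1P => [[Ex Ey]|Hy]; case/setU1P => [[Ex' Ez]|Hz].
  + by rewrite Ey Ez.
  + by subst x; move: (out0 z Hu0); rewrite Hz.
  + by subst x; move: (out0 y Hu0); rewrite Hy.
  + exact: D Hy Hz.
Qed.

Theorem lemma5p1 (V : finType) (E : {set V * V}) (u v : V) :
  simple_digraph E -> u != v -> (u, v) \notin E ->
  let E' := (u, v) |: E in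
  let DeltaF := [set F : {set V * V} | sc_forest E' F && ~~ sc_forest E F] in
  let Fp := [set F : {set V * V} |
               [&& sc_forest E F, forest_root F u == u & forest_root F v != u]] in
  (forall F, F \in DeltaF -> (F :\ (u, v)) \in Fp) /\
  {in DeltaF &, injective (fun F => F :\ (u, v))} /\
  [set F :\ (u, v) | F in DeltaF] = Fp.
Proof.
move=> _ _ HuvE E' DeltaF Fp.
have H1 : forall F, F \in DeltaF -> (F :\ (u, v)) \in Fp.
  move=> F; rewrite !inE => /andP [Hs Hn].
  exact: partA HuvE Hs (uv_in Hs Hn).
split => //; split.
  move=> F1 F2; rewrite !inE => /andP [Hs1 Hn1] /andP [Hs2 Hn2] /= Heq.
  by rewrite -(setD1K (uv_in Hs1 Hn1)) Heq (setD1K (uv_in Hs2 Hn2)).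
apply/setP => F; apply/imsetP/idP => [[G HG ->]|HF]; first exact: H1.
have HF' := HF; rewrite inE in HF'; case/and3P: HF' => Hs /eqP Hu Hv.
have HuvF : (u, v) \notin F.
  apply: contra HuvE => H; case/and3P: Hs => S _ _; exact: subsetP S _ H.
exists ((u, v) |: F); last by rewrite setU1K.
rewrite inE; apply/andP; split; first exact: partB.
apply/negP => /and3P [S _ _]; apply: (negP HuvE); apply: (subsetP S).
by rewrite setU11.
Qed.
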